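(* Let $\Lambda=\mathsf{iA}\oplus\Gamma$ be an iA-logic. Then for every S4K-logic $\Theta$ with $(\mathsf{S4}\otimes\mathsf K)\oplus t(\Gamma)\subseteq\Theta\subseteq(\mathsf{S4}\otimes\mathsf K)\oplus\mathsf{Grz_i}\oplus t(\Gamma)\oplus\mathsf{BHL}$, $\Lambda$ is embedded in $\Theta$ by $t$: for all $\varphi\in\mathcal L_{\multimap}$, $\varphi\in\Lambda$ iff $t(\varphi)\in\Theta$.
   Context: $\mathcal L_{\multimap}$: atoms, $\top,\bot,\wedge,\vee,\to$ and binary $\multimap$. $\mathsf{iA}$: least set containing substitution instances of intuitionistic tautologies and instances of $((\varphi\multimap\psi)\wedge(\varphi\multimap\chi))\to(\varphi\multimap(\psi\wedge\chi))$, $((\varphi\multimap\chi)\wedge(\psi\multimap\chi))\to((\varphi\vee\psi)\multimap\chi)$, $((\varphi\multimap\psi)\wedge(\psi\multimap\chi))\to(\varphi\multimap\chi)$, closed under modus ponens and the rule from $\varphi\to\psi$ infer $\varphi\multimap\psi$; $\mathsf{iA}\oplus\Gamma$ is the least extension containing $\Gamma$ closed under those rules and uniform substitution. S4K-logic: set of formulae of the classical bimodal language $\mathcal L_{i,m}$ ($\Box_i,\Box_m$) containing classical tautologies, $\mathsf K$ for both boxes, $\Box_ip\to p$, $\Box_ip\to\Box_i\Box_ip$, closed under modus ponens, necessitation for both boxes and substitution; $\mathsf{S4}\otimes\mathsf K$ is the least one and $\oplus$ adds axioms. $\mathsf{Grz_i}$: $\Box_i(\Box_i(p\to\Box_ip)\to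 p)\to p$. $\mathsf{BHL}$: $\Box_mp\to\Box_i\Box_mp$. Translation $t$: $t(p)=\Box_ip$, $t(\top)=\top$, $t(\bot)=\bot$, $t(\varphi\star\psi)=\Box_i(t\varphi\star t\psi)$ for $\star\in\{\wedge,\vee,\to\}$, $t(\varphi\multimap\psi)=\Box_i\Box_m(t\varphi\to t\psi)$. *)

(* Defs.v *)
From Stdlib Require Import Bool.

Inductive form : Type :=
| Var : nat -> form
| Top : form
| Bot : form
| And : form -> form -> form
| Or  : form -> form -> form
| Imp : form -> form -> form
| Str : form -> form -> form.   (* strict implication  φ ⊸ ψ *)

Fixpoint subst (s : nat -> form) (f : form) : form :=
  match f with
  | Var n => s n
  | Top => Top
  | Bot => Bot
  | And a b => And (subst s a) (subst s b)
  | Or a b => Or (subst s a) (subst s b)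
  | Imp a b => Imp (subst s a) (subst s b)
  | Str a b => Str (subst s a) (subst s b)
  end.

Fixpoint str_free (f : form) : Prop :=
  match f with
  | Var _ | Top | Bot => True
  | And a b | Or a b | Imp a b => str_free a /\ str_free b
  | Str _ _ => False
  end.

Inductive ipc : form -> Prop :=
| ipc_K : forall a b, str_free a -> str_free b -> ipc (Imp a (Imp b a))
| ipc_S : forall a b c, str_free a -> str_free b -> str_free c ->
    ipc (Imp (Imp a (Imp b c)) (Imp (Imp a b) (Imp a c)))
| ipc_and1 : forall a b, str_free a -> str_free b -> ipc (Imp (And a b) a)
| ipc_and2 : forall a b, str_free a -> str_free b -> ipc (Imp (And a b) b)
| ipc_and3 : forall a b, str_free a -> str_free b -> ipc (Imp a (Imp b (And a b)))
| ipc_or1 : forall a b, str_free a -> str_free b -> ipc (Imp a (Or a b))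
| ipc_or2 : forall a b, str_free a -> str_free b -> ipc (Imp b (Or a b))
| ipc_or3 : forall a b c, str_free a -> str_free b -> str_free c ->
    ipc (Imp (Imp a c) (Imp (Imp b c) (Imp (Or a b) c)))
| ipc_bot : forall a, str_free a -> ipc (Imp Bot a)
| ipc_top : ipc Top
| ipc_mp : forall a b, ipc a -> ipc (Imp a b) -> ipc b.

Inductive iA_ext (G : form -> Prop) : form -> Prop :=
| iA_ipc : forall s f, ipc f -> iA_ext G (subst s f)
| iA_ax1 : forall a b c,
    iA_ext G (Imp (And (Str a b) (Str a c)) (Str a (And b c)))
| iA_ax2 : forall a b c,
    iA_ext G (Imp (And (Str a c) (Str b c)) (Str (Or a b) c))
| iA_ax3 : forall a b c,
    iA_ext G (Imp (And (Str a b) (Str b c)) (Str a c))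
| iA_hyp : forall f, G f -> iA_ext G f
| iA_mp : forall a b, iA_ext G a -> iA_ext G (Imp a b) -> iA_ext G b
| iA_str : forall a b, iA_ext G (Imp a b) -> iA_ext G (Str a b)
| iA_subst : forall s f, iA_ext G f -> iA_ext G (subst s f).

Inductive mform : Type :=
| MVar : nat -> mform
| MTop : mform
| MBot : mform
| MAnd : mform -> mform -> mform
| MOr  : mform -> mform -> mform
| MImp : mform -> mform -> mform
| BoxI : mform -> mform
| BoxM : mform -> mform.

Fixpoint msubst (s : nat -> mform) (f : mform) : mform :=
  match f with
  | MVar n => s n
  | MTop => MTop
  | MBot => MBot
  | MAnd a b => MAnd (msubst s a) (msubst s b)
  | MOr a b => MOr (msubst s a) (msubst s b)
  | MImp a b => MImp (msubst s a) (msubst s b)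
  | BoxI a => BoxI (msubst s a)
  | BoxM a => BoxM (msubst s a)
  end.

Fixpoint box_free (f : mform) : Prop :=
  match f with
  | MVar _ | MTop | MBot => True
  | MAnd a b | MOr a b | MImp a b => box_free a /\ box_free b
  | BoxI _ | BoxM _ => False
  end.

Fixpoint beval (v : nat -> bool) (f : mform) : bool :=
  match f with
  | MVar n => v n
  | MTop => true
  | MBot => false
  | MAnd a b => beval v a && beval v b
  | MOr a b => beval v a || beval v b
  | MImp a b => implb (beval v a) (beval v b)
  | BoxI _ | BoxM _ => false
  end.

Definition ctaut (f : mform) : Prop := box_free f /\ forall v, beval v f = true.

Definition p0 : mform := MVar 0.
Definition p1 : mform := MVar 1.

Definition K_i : mform := MImp (BoxI (MImp p0 p1)) (MImp (BoxI p0) (BoxI p1)).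
Definition K_m : mform := MImp (BoxM (MImp p0 p1)) (MImp (BoxM p0) (BoxM p1)).
Definition T_i : mform := MImp (BoxI p0) p0.
Definition Four_i : mform := MImp (BoxI p0) (BoxI (BoxI p0)).

Definition Grz_i : mform :=
  MImp (BoxI (MImp (BoxI (MImp p0 (BoxI p0))) p0)) p0.
Definition BHL : mform := MImp (BoxM p0) (BoxI (BoxM p0)).

Definition is_S4K_logic (L : mform -> Prop) : Prop :=
  (forall s f, ctaut f -> L (msubst s f)) /\
  L K_i /\ L K_m /\ L T_i /\ L Four_i /\
  (forall a b, L a -> L (MImp a b) -> L b) /\
  (forall a, L a -> L (BoxI a)) /\
  (forall a, L a -> L (BoxM a)) /\
  (forall s f, L f -> L (msubst s f)).

Inductive S4K_ext (D : mform -> Prop) : mform -> Prop :=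
| S_taut : forall s f, ctaut f -> S4K_ext D (msubst s f)
| S_Ki : S4K_ext D K_i
| S_Km : S4K_ext D K_m
| S_Ti : S4K_ext D T_i
| S_4i : S4K_ext D Four_i
| S_hyp : forall f, D f -> S4K_ext D f
| S_mp : forall a b, S4K_ext D a -> S4K_ext D (MImp a b) -> S4K_ext D b
| S_neci : forall a, S4K_ext D a -> S4K_ext D (BoxI a)
| S_necm : forall a, S4K_ext D a -> S4K_ext D (BoxM a)
| S_subst : forall s f, S4K_ext D f -> S4K_ext D (msubst s f).

Fixpoint t (f : form) : mform :=
  match f with
  | Var n => BoxI (MVar n)
  | Top => MTop
  | Bot => MBot
  | And a b => BoxI (MAnd (t a) (t b))
  | Or a b => BoxI (MOr (t a) (t b))
  | Imp a b => BoxI (MImp (t a) (t b))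
  | Str a b => BoxI (BoxM (MImp (t a) (t b)))
  end.

Definition t_img (G : form -> Prop) : mform -> Prop :=
  fun g => exists f, G f /\ g = t f.

Definition upper_axioms (G : form -> Prop) : mform -> Prop :=
  fun g => g = Grz_i \/ t_img G g \/ g = BHL.

(* Main.v *)
Require Import Defs.
From Stdlib Require Import Classical ClassicalEpsilon List Lia PeanoNat Cantor Wf_nat.
Import ListNotations.

Definition thm (G : form -> Prop) (a : form) := iA_ext G a.
Definition le (G : form -> Prop) (a b : form) := iA_ext G (Imp a b).

Definition sb3 (a b c : form) (n : nat) : form :=
  match n with 0 => a | 1 => b | _ => c end.

Lemma ax_K G a b : thm G (Imp a (Imp b a)).
Proof.
  exact (iA_ipc G (sb3 a b a) (Imp (Var 0) (Imp (Var 1) (Var 0)))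
    (ipc_K (Var 0) (Var 1) I I)).
Qed.
Lemma ax_S G a b c : thm G (Imp (Imp a (Imp b c)) (Imp (Imp a b) (Imp a c))).
Proof.
  exact (iA_ipc G (sb3 a b c) (Imp (Imp (Var 0) (Imp (Var 1) (Var 2))) (Imp (Imp (Var 0) (Var 1)) (Imp (Var 0) (Var 2))))
    (ipc_S (Var 0) (Var 1) (Var 2) I I I)).
Qed.
Lemma ax_and1 G a b : le G (And a b) a.
Proof. exact (iA_ipc G (sb3 a b a) (Imp (And (Var 0) (Var 1)) (Var 0)) (ipc_and1 (Var 0) (Var 1) I I)). Qed.
Lemma ax_and2 G a b : le G (And a b) b.
Proof. exact (iA_ipc G (sb3 a b a) (Imp (And (Var 0) (Var 1)) (Var 1)) (ipc_and2 (Var 0) (Var 1) I I)). Qed.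
Lemma ax_and3 G a b : le G a (Imp b (And a b)).
Proof. exact (iA_ipc G (sb3 a b a) (Imp (Var 0) (Imp (Var 1) (And (Var 0) (Var 1)))) (ipc_and3 (Var 0) (Var 1) I I)). Qed.
Lemma ax_or1 G a b : le G a (Or a b).
Proof. exact (iA_ipc G (sb3 a b a) (Imp (Var 0) (Or (Var 0) (Var 1))) (ipc_or1 (Var 0) (Var 1) I I)). Qed.
Lemma ax_or2 G a b : le G b (Or a b).
Proof. exact (iA_ipc G (sb3 a b a) (Imp (Var 1) (Or (Var 0) (Var 1))) (ipc_or2 (Var 0) (Var 1) I I)). Qed.
Lemma ax_or3 G a b c : thm G (Imp (Imp a c) (Imp (Imp b c) (Imp (Or a b) c))).
Proof. exact (iA_ipc G (sb3 a b c) (Imp (Imp (Var 0) (Var 2)) (Imp (Imp (Var 1) (Var 2)) (Imp (Or (Var 0) (Var 1)) (Var 2)))) (ipc_or3 (Var 0) (Var 1) (Var 2) I I I)). Qed.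
Lemma ax_bot G a : le G Bot a.
Proof. exact (iA_ipc G (sb3 a a a) (Imp Bot (Var 0)) (ipc_bot (Var 0) I)). Qed.
Lemma ax_top G : thm G Top.
Proof. exact (iA_ipc G (sb3 Top Top Top) Top ipc_top). Qed.

Lemma mp G a b : thm G a -> thm G (Imp a b) -> thm G b.
Proof. intros H1 H2; exact (iA_mp G a b H1 H2). Qed.

Lemma le_refl G a : le G a a.
Proof.
  unfold le. apply (mp G (Imp a (Imp a a))). apply ax_K.
  apply (mp G (Imp a (Imp (Imp a a) a))). apply ax_K. apply ax_S.
Qed.
Lemma thm_le G a b : thm G b -> le G a b.
Proof. intros H. eapply mp. exact H. apply ax_K. Qed.
Lemma le_mp G x y z : le G x (Imp y z) -> le G x y -> le G x z.
Proof. intros H1 H2. eapply mp. exact H2. eapply mp. exact H1. apply ax_S. Qed.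
Lemma le_trans G a b c : le G a b -> le G b c -> le G a c.
Proof. intros H1 H2. eapply le_mp. apply thm_le. exact H2. exact H1. Qed.
Lemma le_top G a : le G a Top.
Proof. apply thm_le, ax_top. Qed.
Lemma top_le G b : le G Top b -> thm G b.
Proof. intros H. eapply mp. apply ax_top. exact H. Qed.
Lemma and_intro G c a b : le G c a -> le G c b -> le G c (And a b).
Proof. intros H1 H2. eapply le_mp. eapply le_trans. exact H1. apply ax_and3. exact H2. Qed.
Lemma or_elim G a b c : le G a c -> le G b c -> le G (Or a b) c.
Proof. intros H1 H2. eapply mp. exact H2. eapply mp. exact H1. apply ax_or3. Qed.
Lemma imp_mono G b x y : le G x y -> le G (Imp b x) (Imp b y).
Proof. intros H. eapply mp. eapply mp. exact H. apply ax_K. apply ax_S. Qed.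
Lemma curry G a b c : le G (And a b) c -> le G a (Imp b c).
Proof. intros H. eapply le_trans. apply ax_and3. apply imp_mono. exact H. Qed.
Lemma uncurry G a b c : le G a (Imp b c) -> le G (And a b) c.
Proof. intros H. eapply le_mp. eapply le_trans. apply ax_and1. exact H. apply ax_and2. Qed.
Lemma and_le1 G a b c : le G a c -> le G (And a b) c.
Proof. intros; eapply le_trans. apply ax_and1. auto. Qed.
Lemma and_le2 G a b c : le G b c -> le G (And a b) c.
Proof. intros; eapply le_trans. apply ax_and2. auto. Qed.
Lemma le_or1 G c a b : le G c a -> le G c (Or a b).
Proof. intros; eapply le_trans. eauto. apply ax_or1. Qed.
Lemma le_or2 G c a b : le G c b -> le G c (Or a b).
Proof. intros; eapply le_trans. eauto. apply ax_or2. Qed.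
Lemma and_comm_le G a b : le G (And a b) (And b a).
Proof. apply and_intro. apply ax_and2. apply ax_and1. Qed.
Lemma distr G a b c : le G (And a (Or b c)) (Or (And a b) (And a c)).
Proof.
  eapply le_trans. apply and_comm_le. apply uncurry. apply or_elim.
  - apply curry. eapply le_trans. apply and_comm_le. apply ax_or1.
  - apply curry. eapply le_trans. apply and_comm_le. apply ax_or2.
Qed.
Lemma and_mono G a b a' b' : le G a a' -> le G b b' -> le G (And a b) (And a' b').
Proof. intros; apply and_intro; [apply and_le1|apply and_le2]; auto. Qed.

Lemma str_of_le G X a b : le G a b -> le G X (Str a b).
Proof. intros H. apply thm_le. apply iA_str. exact H. Qed.
Lemma str_trans G X a b c : le G X (Str a b) -> le G X (Str b c) -> le G X (Str a c).
Proof. intros H1 H2. eapply le_trans. apply and_intro; [exact H1|exact H2]. exact (iA_ax3 G a b c). Qed.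
Lemma str_conj G X a b c : le G X (Str a b) -> le G X (Str a c) -> le G X (Str a (And b c)).
Proof. intros H1 H2. eapply le_trans. apply and_intro; [exact H1|exact H2]. exact (iA_ax1 G a b c). Qed.
Lemma str_disj G X a b c : le G X (Str a c) -> le G X (Str b c) -> le G X (Str (Or a b) c).
Proof. intros H1 H2. eapply le_trans. apply and_intro; [exact H1|exact H2]. exact (iA_ax2 G a b c). Qed.
Fixpoint enc (f : form) : nat :=
  match f with
  | Var n => to_nat (0, n)
  | Top => to_nat (1, 0)
  | Bot => to_nat (2, 0)
  | And a b => to_nat (3, to_nat (enc a, enc b))
  | Or a b => to_nat (4, to_nat (enc a, enc b))
  | Imp a b => to_nat (5, to_nat (enc a, enc b))
  | Str a b => to_nat (6, to_nat (enc a, enc b))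
  end.

Fixpoint dec (k n : nat) : form :=
  match k with
  | 0 => Top
  | S k =>
    let (tg, r) := of_nat n in
    match tg with
    | 0 => Var r
    | 1 => Top
    | 2 => Bot
    | 3 => And (dec k (fst (of_nat r))) (dec k (snd (of_nat r)))
    | 4 => Or (dec k (fst (of_nat r))) (dec k (snd (of_nat r)))
    | 5 => Imp (dec k (fst (of_nat r))) (dec k (snd (of_nat r)))
    | _ => Str (dec k (fst (of_nat r))) (dec k (snd (of_nat r)))
    end
  end.

Fixpoint depth (f : form) : nat :=
  match f with
  | Var _ | Top | Bot => 1
  | And a b | Or a b | Imp a b | Str a b => S (Nat.max (depth a) (depth b))
  end.

Lemma dec_enc f : forall k, depth f <= k -> dec k (enc f) = f.
Proof.
  induction f; intros k Hk; destruct k as [|k]; cbn -[to_nat of_nat] in *; try lia;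
    rewrite ?cancel_of_to; cbn -[to_nat of_nat].
  all: try reflexivity.
  all: rewrite IHf1, IHf2 by lia; reflexivity.
Qed.

Definition en (n : nat) : form := let (k, c) := of_nat n in dec k c.
Lemma en_surj f : exists n, en n = f.
Proof.
  exists (to_nat (depth f, enc f)). unfold en. rewrite cancel_of_to.
  apply dec_enc. lia.
Qed.

Definition prime (G : form -> Prop) (F : form -> Prop) : Prop :=
  (forall x y, F x -> le G x y -> F y) /\
  (forall x y, F x -> F y -> F (And x y)) /\
  (forall x y, F (Or x y) -> F x \/ F y) /\
  ~ F Bot /\ F Top.


Lemma pr_le G F x y : prime G F -> F x -> le G x y -> F y.
Proof. intros [H _] ? ?; eauto. Qed.
Lemma pr_and G F x y : prime G F -> (F (And x y) <-> F x /\ F y).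
Proof.
  intros HP. split.
  - intros H; split; eapply pr_le; eauto; [apply ax_and1|apply ax_and2].
  - intros [H1 H2]. destruct HP as [_ [H _]]. auto.
Qed.
Lemma pr_or G F x y : prime G F -> (F (Or x y) <-> F x \/ F y).
Proof.
  intros HP. split.
  - destruct HP as [_ [_ [H _]]]. auto.
  - intros [H|H]; eapply pr_le; eauto; [apply ax_or1|apply ax_or2].
Qed.
Lemma pr_bot G F : prime G F -> ~ F Bot.
Proof. intros [_ [_ [_ [H _]]]]; auto. Qed.
Lemma pr_top G F : prime G F -> F Top.
Proof. intros [_ [_ [_ [_ H]]]]; auto. Qed.
Lemma pr_thm G F x : prime G F -> thm G x -> F x.
Proof. intros HP H. exact (pr_le G F Top x HP (pr_top G F HP) (thm_le G Top x H)). Qed.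
Lemma pr_imp G F x y : prime G F -> (F (Imp x y) -> F x -> F y).
Proof.
  intros HP H1 H2. apply (pr_le G F (And (Imp x y) x) y HP).
  apply (proj2 (pr_and G F _ _ HP)). split; eauto.
  apply uncurry. apply le_refl.
Qed.

(* Lindenbaum *)
Definition bdec (P : Prop) : bool := if excluded_middle_informative P then true else false.

Fixpoint chain (G : form -> Prop) (a b : form) (n : nat) : form :=
  match n with
  | 0 => a
  | S n => let t := chain G a b n in
           if bdec (le G (And t (en n)) b) then t else And t (en n)
  end.

Lemma chain_nle G a b : ~ le G a b -> forall n, ~ le G (chain G a b n) b.
Proof.
  intros H n; induction n; simpl; auto.
  unfold bdec; destruct (excluded_middle_informative _); auto.
Qed.
Lemma chain_step G a b n : le G (chain G a b (S n)) (chain G a b n).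
Proof. simpl. unfold bdec; destruct (excluded_middle_informative _). apply le_refl. apply ax_and1. Qed.
Lemma chain_mono G a b n m : n <= m -> le G (chain G a b m) (chain G a b n).
Proof.
  induction 1. apply le_refl. eapply le_trans. apply chain_step. auto.
Qed.

Lemma separation G a b : ~ le G a b -> exists F, prime G F /\ F a /\ ~ F b.
Proof.
  intros Hab.
  pose (F := fun x => exists n, le G (chain G a b n) x).
  assert (Hc := chain_nle G a b Hab).
  assert (FF : forall x y, F x -> F y -> F (And x y)).
  { intros x y [n Hn] [m Hm]. exists (Nat.max n m). apply and_intro.
    eapply le_trans; [apply chain_mono|exact Hn]; lia.
    eapply le_trans; [apply chain_mono|exact Hm]; lia. }
  assert (Fb : ~ F b). { intros [n Hn]. exact (Hc n Hn). }
  assert (Fx : forall x, ~ F x -> le G (And (chain G a b (proj1_sig (constructive_indefinite_description _ (en_surj x)))) x) b).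
  { intros x Hx. destruct (constructive_indefinite_description _ (en_surj x)) as [i Hi]. simpl.
    apply NNPP; intro Hn. apply Hx. exists (S i). simpl. unfold bdec.
    destruct (excluded_middle_informative _). subst; contradiction.
    subst. apply ax_and2. }
  exists F. split; [|split].
  - split; [|split; [|split; [|split]]].
    + intros x y [n Hn] H. exists n. eapply le_trans; eauto.
    + exact FF.
    + intros x y [n Hn]. apply NNPP; intro Hn'.
      apply not_or_and in Hn'. destruct Hn' as [Hx Hy].
      pose proof (Fx x Hx) as H1. pose proof (Fx y Hy) as H2.
      set (i := proj1_sig _) in H1. set (j := proj1_sig _) in H2.
      apply (Hc (Nat.max n (Nat.max i j))).
      set (k := Nat.max n (Nat.max i j)).
      eapply le_trans. apply and_intro. apply le_refl.
      eapply le_trans; [apply chain_mono|exact Hn]; lia.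
      eapply le_trans. apply distr. apply or_elim.
      * eapply le_trans; [|exact H1]. apply and_mono. apply chain_mono; lia. apply le_refl.
      * eapply le_trans; [|exact H2]. apply and_mono. apply chain_mono; lia. apply le_refl.
    + intros [n Hn]. apply (Hc n). eapply le_trans. exact Hn. apply ax_bot.
    + exists 0. apply le_top.
  - exists 0. apply le_refl.
  - exact Fb.
Qed.

Lemma sep G a b : (forall F, prime G F -> F a -> F b) -> le G a b.
Proof.
  intros H. apply NNPP; intro Hn. destruct (separation G a b Hn) as [F [HP [Ha Hb]]]. exact (Hb (H F HP Ha)).
Qed.

Definition conj (l : list form) : form := fold_right And Top l.
Lemma pr_conj G F l : prime G F -> (F (conj l) <-> forall x, In x l -> F x).
Proof.
  intros HP; induction l as [|y l IH]; simpl.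
  - split; [tauto|intros; apply (pr_top G F HP)].
  - rewrite (pr_and G F _ _ HP), IH. split.
    + intros [H1 H2] x [->|Hx]; auto.
    + intros H; split; auto.
Qed.

Definition clauses (L : list (form * form)) (F : form -> Prop) : Prop :=
  forall p, In p L -> ~ F (fst p) \/ F (snd p).
Definition conjstr (L : list (form * form)) : form :=
  conj (map (fun p => Str (fst p) (snd p)) L).
Definition conjimp (L : list (form * form)) : form :=
  conj (map (fun p => Imp (fst p) (snd p)) L).

Lemma crucial G L : forall a b,
  (forall H, prime G H -> H a -> clauses L H -> H b) -> le G (conjstr L) (Str a b).
Proof.
  induction L as [|[c d] L IH]; intros a b Hyp.
  - apply str_of_le. apply sep. intros H HP Ha. apply Hyp; auto. intros p [].
  - set (X := conjstr ((c, d) :: L)).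
    assert (HX : le G X (conjstr L)) by apply ax_and2.
    assert (Hcd : le G X (Str c d)) by apply ax_and1.
    assert (IH1 : le G X (Str (And a d) b)).
    { eapply le_trans. exact HX. apply IH. intros H HP Had HL.
      apply (pr_and G H _ _ HP) in Had. destruct Had as [Ha Hd].
      apply Hyp; auto. intros p [<-|Hp]; simpl; auto. }
    assert (IH2 : le G X (Str a (Or b c))).
    { eapply le_trans. exact HX. apply IH. intros H HP Ha HL.
      apply (pr_or G H _ _ HP). destruct (classic (H c)) as [Hc|Hc]; auto.
      left. apply Hyp; auto. intros p [<-|Hp]; simpl; auto. }
    assert (s3 : le G X (Str a (And a (Or b c)))).
    { apply str_conj. apply str_of_le, le_refl. exact IH2. }
    assert (s4 : le G X (Str a (Or b (And a c)))).
    { eapply str_trans. exact s3. apply str_of_le. eapply le_trans. apply distr.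
      apply or_elim. apply le_or1. apply ax_and2. apply le_or2. apply le_refl. }
    assert (s6 : le G X (Str (And a c) d)).
    { eapply str_trans. apply str_of_le. apply ax_and2. exact Hcd. }
    assert (s8 : le G X (Str (And a c) (And a d))).
    { apply str_conj. apply str_of_le. apply ax_and1. exact s6. }
    assert (s9 : le G X (Str (And a c) b)).
    { eapply str_trans. exact s8. exact IH1. }
    eapply str_trans. exact s4. apply str_disj. apply str_of_le, le_refl. exact s9.
Qed.

Definition pset := (form -> Prop) -> Prop.
Definition IB (G : form -> Prop) (S : pset) : pset :=
  fun F => exists a, F a /\ forall H, prime G H -> H a -> S H.
Definition MB (G : form -> Prop) (S : pset) : pset :=
  fun F => exists L, (forall p, In p L -> F (Str (fst p) (snd p))) /\
                     forall H, prime G H -> clauses L H -> S H.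

Lemma IB_ext G S T : (forall H, prime G H -> (S H <-> T H)) -> forall F, IB G S F <-> IB G T F.
Proof.
  intros E F. split; intros [a [Ha Hs]]; exists a; split; auto; intros H HP Ha'; apply E; auto.
Qed.
Lemma MB_ext G S T : (forall H, prime G H -> (S H <-> T H)) -> forall F, MB G S F <-> MB G T F.
Proof.
  intros E F. split; intros [L [Ha Hs]]; exists L; split; auto; intros H HP Ha'; apply E; auto.
Qed.

Lemma IB_op G a F : prime G F -> (IB G (fun H => H a) F <-> F a).
Proof.
  intros HP. split.
  - intros [c [Hc Hs]]. eapply pr_le; eauto. apply sep. auto.
  - intros Ha. exists a. auto.
Qed.

Lemma IB_clauses G L F : prime G F -> (IB G (clauses L) F <-> F (conjimp L)).
Proof.
  intros HP. unfold conjimp. rewrite (pr_conj G F _ HP). split.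
  - intros [e [He Hs]] x Hx. apply in_map_iff in Hx. destruct Hx as [p [<- Hp]].
    eapply pr_le; eauto. apply curry. apply sep. intros H HH Hea.
    apply (pr_and G H _ _ HH) in Hea. destruct Hea as [H1 H2].
    destruct (Hs H HH H1 p Hp); tauto.
  - intros Hc. exists (conjimp L). split. apply (pr_conj G F _ HP); auto.
    intros H HH Hci p Hp. pose proof (proj1 (pr_conj G H _ HH) Hci) as Hci2. clear Hci. rename Hci2 into Hci.
    destruct (classic (H (fst p))) as [Ha|Ha]; auto. right.
    eapply pr_imp; eauto. apply Hci. apply in_map_iff. eauto.
Qed.

Lemma MB_clauses G L F : prime G F -> (MB G (clauses L) F <-> F (conjstr L)).
Proof.
  intros HP. unfold conjstr; rewrite (pr_conj G F _ HP); fold conjstr. split.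
  - intros [L' [HL' Hs]] x Hx. apply in_map_iff in Hx. destruct Hx as [p [<- Hp]].
    apply (pr_le G F (conjstr L') _ HP).
    + apply (pr_conj G F _ HP). intros y Hy. apply in_map_iff in Hy.
      destruct Hy as [q [<- Hq]]. auto.
    + apply crucial. intros H HH Ha Hc. destruct (Hs H HH Hc p Hp); tauto.
  - intros Hc. exists L. split; auto.
    intros p Hp. apply Hc. apply in_map_iff. eauto.
Qed.

Definition determ (G : form -> Prop) (O : list form) (S : pset) : Prop :=
  forall F H, prime G F -> prime G H -> (forall o, In o O -> (F o <-> H o)) -> S F -> S H.
Definition Good (G : form -> Prop) (S : pset) : Prop := exists O, determ G O S.

Lemma clauses_app L1 L2 F : clauses (L1 ++ L2) F <-> clauses L1 F /\ clauses L2 F.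
Proof.
  unfold clauses. split.
  - intros H; split; intros p Hp; apply H; apply in_or_app; auto.
  - intros [H1 H2] p Hp. apply in_app_or in Hp. destruct Hp; auto.
Qed.
Lemma clauses_map (f : form * form -> form * form) L F :
  (forall p, In p L -> ((~ F (fst (f p)) \/ F (snd (f p))) <-> (~ F (fst p) \/ F (snd p)))) ->
  (clauses (map f L) F <-> clauses L F).
Proof.
  unfold clauses. intros E. split.
  - intros H p Hp. apply E; auto. apply H. apply in_map; auto.
  - intros H q Hq. apply in_map_iff in Hq. destruct Hq as [p [<- Hp]]. apply E; auto.
Qed.
Lemma clauses_map_true (f : form * form -> form * form) L F :
  (forall p, In p L -> (~ F (fst (f p)) \/ F (snd (f p)))) -> clauses (map f L) F.
Proof.
  intros E q Hq. apply in_map_iff in Hq. destruct Hq as [p [<- Hp]]. auto.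
Qed.

Lemma cnf G O : forall S, determ G O S ->
  exists L, forall F, prime G F -> (S F <-> clauses L F).
Proof.
  induction O as [|o O IH]; intros S HS.
  - destruct (classic (exists F, prime G F /\ S F)) as [[F0 [HP0 HS0]]|Hn].
    + exists []. intros F HF. split. intros _ p []. intros _.
      apply (HS F0 F); auto. intros o [].
    + exists [(Top, Bot)]. intros F HF. split.
      * intros HSF. exfalso. apply Hn; eauto.
      * intros Hc. destruct (Hc (Top, Bot) (or_introl eq_refl)) as [H|H]; simpl in H.
        exfalso; apply H, (pr_top G F HF). exfalso; apply (pr_bot G F HF H).
  - set (S1 := fun F => exists H, prime G H /\ H o /\ (forall o', In o' O -> (F o' <-> H o')) /\ S H).
    set (S2 := fun F => exists H, prime G H /\ ~ H o /\ (forall o', In o' O -> (F o' <-> H o')) /\ S H).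
    assert (D1 : determ G O S1).
    { intros F F' HF HF' E [H [HH [Ho [E2 HSH]]]]. exists H.
      split; [auto|split;[auto|split;[|auto]]].
      intros o' Ho'. rewrite <- (E o' Ho'). apply E2; auto. }
    assert (D2 : determ G O S2).
    { intros F F' HF HF' E [H [HH [Ho [E2 HSH]]]]. exists H.
      split; [auto|split;[auto|split;[|auto]]].
      intros o' Ho'. rewrite <- (E o' Ho'). apply E2; auto. }
    destruct (IH S1 D1) as [L1 HL1]. destruct (IH S2 D2) as [L2 HL2].
    exists (map (fun p => (And o (fst p), snd p)) L1 ++ map (fun p => (fst p, Or o (snd p))) L2).
    intros F HF. rewrite clauses_app.
    destruct (classic (F o)) as [Fo|Fo].
    + rewrite (clauses_map _ L1 F). 2:{ intros p _; simpl. rewrite (pr_and G F _ _ HF). tauto. }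
      assert (Hc2 : clauses (map (fun p : form * form => (fst p, Or o (snd p))) L2) F).
      { apply clauses_map_true. intros p _. simpl. right. apply (pr_or G F _ _ HF). auto. }
      rewrite <- HL1 by auto. split.
      * intros HSF. split; auto. exists F. split; [auto|split;[auto|split;[|auto]]]. intros; tauto.
      * intros [[H [HH [Ho [E HSH]]]] _]. apply (HS H F); auto.
        intros o' [<-|Ho']. tauto. symmetry; apply E; auto.
    + rewrite (clauses_map _ L2 F). 2:{ intros p _; simpl. rewrite (pr_or G F _ _ HF). tauto. }
      assert (Hc2 : clauses (map (fun p : form * form => (And o (fst p), snd p)) L1) F).
      { apply clauses_map_true. intros p _. simpl. left. rewrite (pr_and G F _ _ HF). tauto. }
      rewrite <- HL2 by auto. split.
      * intros HSF. split; auto. exists F. split; [auto|split;[auto|split;[|auto]]]. intros; tauto.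
      * intros [_ [H [HH [Ho [E HSH]]]]]. apply (HS H F); auto.
        intros o' [<-|Ho']. tauto. symmetry; apply E; auto.
Qed.

Fixpoint cnt (Os : list form) (F : form -> Prop) : nat :=
  match Os with [] => 0 | o :: Os' => (if bdec (F o) then 1 else 0) + cnt Os' F end.
Fixpoint selL (Os : list form) (F : form -> Prop) : list form :=
  match Os with [] => [] | o :: Os' => if bdec (F o) then o :: selL Os' F else selL Os' F end.

Lemma selL_spec O F x : In x (selL O F) <-> In x O /\ F x.
Proof.
  induction O as [|o O IH]; simpl. tauto.
  unfold bdec; destruct (excluded_middle_informative (F o)); simpl; rewrite IH;
    split; intuition (subst; auto); tauto.
Qed.
Lemma cnt_len O F : cnt O F <= length O.
Proof. induction O; simpl; [lia|]. unfold bdec; destruct (excluded_middle_informative _); lia. Qed.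
Lemma cnt_mono O F H : (forall o, In o O -> F o -> H o) -> cnt O F <= cnt O H.
Proof.
  induction O as [|o O IH]; simpl; intros E. lia.
  specialize (IH (fun x Hx => E x (or_intror Hx))).
  unfold bdec; destruct (excluded_middle_informative (F o)), (excluded_middle_informative (H o)); try lia.
  exfalso; auto.
Qed.
Lemma cnt_strict O F H : (forall o, In o O -> F o -> H o) ->
  (exists o, In o O /\ H o /\ ~ F o) -> cnt O F < cnt O H.
Proof.
  induction O as [|o O IH]; simpl; intros E [x [Hx [Hh Hf]]]. destruct Hx.
  assert (E' : forall o0, In o0 O -> F o0 -> H o0) by auto.
  pose proof (cnt_mono O F H E').
  destruct Hx as [Heq|Hx].
  - subst o. unfold bdec; destruct (excluded_middle_informative (F x)), (excluded_middle_informative (H x)); try tauto; lia.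
  - assert (cnt O F < cnt O H) by (apply IH; eauto).
    unfold bdec; destruct (excluded_middle_informative (F o)), (excluded_middle_informative (H o)); try lia.
    exfalso; auto.
Qed.

Lemma grz_sound G O P : determ G O P -> forall F, prime G F ->
  IB G (fun H => IB G (fun K => P K -> IB G P K) H -> P H) F -> P F.
Proof.
  intros HD F HF [c [Fc HU]].
  assert (Cl : forall n H, prime G H -> length O - cnt O H = n -> H c -> P H).
  { intro n. induction n as [n IH] using lt_wf_ind.
    intros H HH Hn Hc. apply NNPP; intro nP.
    apply nP. apply HU; auto.
    exists (And c (conj (selL O H))). split.
    { apply (pr_and G H _ _ HH). split; auto. apply (pr_conj G H _ HH).
      intros x Hx. apply selL_spec in Hx. tauto. }
    intros K KP Kv PK. apply (pr_and G K _ _ KP) in Kv. destruct Kv as [Kc Ksel].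
    rewrite (pr_conj G K _ KP) in Ksel.
    assert (Sub : forall o, In o O -> H o -> K o) by (intros o Ho Hho; apply Ksel, selL_spec; auto).
    destruct (classic (exists o, In o O /\ K o /\ ~ H o)) as [Ex|NEx].
    2:{ exfalso. apply nP. apply (HD K H); auto. intros o Ho. split; auto.
        intros Ko. apply NNPP; intro; apply NEx; eauto. }
    assert (Lt : cnt O H < cnt O K) by (apply cnt_strict; auto).
    exists (And c (conj (selL O K))). split.
    { apply (pr_and G K _ _ KP). split; auto. apply (pr_conj G K _ KP).
      intros x Hx. apply selL_spec in Hx. tauto. }
    intros K' K'P K'v. apply (pr_and G K' _ _ K'P) in K'v. destruct K'v as [K'c K'sel].
    rewrite (pr_conj G K' _ K'P) in K'sel.
    assert (Sub' : forall o, In o O -> K o -> K' o) by (intros o Ho Hko; apply K'sel, selL_spec; auto).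
    pose proof (cnt_mono O K K' Sub'). pose proof (cnt_len O K').
    apply (IH (length O - cnt O K')); auto. lia. }
  apply (Cl _ F HF eq_refl Fc).
Qed.

Fixpoint eval (G : form -> Prop) (v : nat -> pset) (f : mform) : pset :=
  match f with
  | MVar n => v n
  | MTop => fun _ => True
  | MBot => fun _ => False
  | MAnd a b => fun F => eval G v a F /\ eval G v b F
  | MOr a b => fun F => eval G v a F \/ eval G v b F
  | MImp a b => fun F => eval G v a F -> eval G v b F
  | BoxI a => IB G (eval G v a)
  | BoxM a => MB G (eval G v a)
  end.

Lemma eval_msubst G v s f : eval G v (msubst s f) = eval G (fun n => eval G v (s n)) f.
Proof. induction f; simpl; try rewrite IHf1, IHf2; try rewrite IHf; reflexivity. Qed.

Lemma eval_beval G v f F : box_free f ->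
  (eval G v f F <-> beval (fun n => bdec (v n F)) f = true).
Proof.
  induction f; simpl; intros Hb; try tauto.
  - unfold bdec; destruct (excluded_middle_informative (v n F)); split; auto; intros; try discriminate; tauto.
  - split; [tauto|intros; discriminate].
  - destruct Hb as [H1 H2]. rewrite IHf1, IHf2 by auto.
    destruct (beval _ f1), (beval _ f2); simpl; intuition congruence.
  - destruct Hb as [H1 H2]. rewrite IHf1, IHf2 by auto.
    destruct (beval _ f1), (beval _ f2); simpl; intuition congruence.
  - destruct Hb as [H1 H2]. rewrite IHf1, IHf2 by auto.
    destruct (beval _ f1), (beval _ f2); simpl; intuition congruence.
Qed.

Lemma Good_ext G S T : (forall F, prime G F -> (S F <-> T F)) -> Good G T -> Good G S.
Proof.
  intros E [O HO]. exists O. intros F H HF HH EO HS. apply E; auto.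
  apply (HO F H); auto. apply E; auto.
Qed.
Lemma determ_iff G O S F H : determ G O S -> prime G F -> prime G H ->
  (forall o, In o O -> (F o <-> H o)) -> (S F <-> S H).
Proof.
  intros D HF HH E. split; apply D; auto. intros o Ho. symmetry; auto.
Qed.
Lemma Good_bin G S T (op : Prop -> Prop -> Prop) :
  (forall A B A' B', (A <-> A') -> (B <-> B') -> op A B -> op A' B') ->
  Good G S -> Good G T -> Good G (fun F => op (S F) (T F)).
Proof.
  intros Hop [O1 H1] [O2 H2]. exists (O1 ++ O2). intros F H HF HH E.
  apply Hop.
  apply (determ_iff G O1 S F H H1 HF HH). intros; apply E; apply in_or_app; auto.
  apply (determ_iff G O2 T F H H2 HF HH). intros; apply E; apply in_or_app; auto.
Qed.
Lemma Good_op G c : Good G (fun F => F c).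
Proof. exists [c]. intros F H HF HH E. apply E. left; auto. Qed.
Lemma Good_const G (P : Prop) : Good G (fun _ => P).
Proof. exists []. intros F H HF HH E HP. exact HP. Qed.

Lemma Good_IB G S : Good G S -> exists c, forall F, prime G F -> (IB G S F <-> F c).
Proof.
  intros [O HO]. destruct (cnf G O S HO) as [L HL]. exists (conjimp L).
  intros F HF. rewrite (IB_ext G S (clauses L) HL). apply IB_clauses; auto.
Qed.
Lemma Good_MB G S : Good G S -> exists c, forall F, prime G F -> (MB G S F <-> F c).
Proof.
  intros [O HO]. destruct (cnf G O S HO) as [L HL]. exists (conjstr L).
  intros F HF. rewrite (MB_ext G S (clauses L) HL). apply MB_clauses; auto.
Qed.

Lemma Good_eval G v : (forall n, Good G (v n)) -> forall f, Good G (eval G v f).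
Proof.
  intros Hv f; induction f; simpl; auto.
  - apply Good_const.
  - apply Good_const.
  - apply (Good_bin G _ _ and); auto. tauto.
  - apply (Good_bin G _ _ or); auto. tauto.
  - apply (Good_bin G _ _ (fun A B => A -> B)); auto. tauto.
  - destruct (Good_IB G _ IHf) as [c Hc]. eapply Good_ext. exact Hc. apply Good_op.
  - destruct (Good_MB G _ IHf) as [c Hc]. eapply Good_ext. exact Hc. apply Good_op.
Qed.

Lemma clause1 G a b H : prime G H -> ((H a -> H b) <-> clauses [(a, b)] H).
Proof.
  intros HH. unfold clauses. split.
  - intros Hi p [<-|[]]. simpl. destruct (classic (H a)); auto.
  - intros Hc Ha. destruct (Hc (a, b) (or_introl eq_refl)); simpl in *; tauto.
Qed.
Lemma conj1 G F x : prime G F -> (F (conj [x]) <-> F x).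
Proof. intros HF. rewrite (pr_conj G F _ HF). simpl. split; auto. intros Hx y [<-|[]]; auto. Qed.

Lemma trans_eval G v c : (forall n F, prime G F -> (IB G (v n) F <-> F (c n))) ->
  forall g F, prime G F -> (eval G v (t g) F <-> F (subst c g)).
Proof.
  intros Hc g. induction g; intros F HF; simpl.
  - apply Hc; auto.
  - split; auto. intros _; apply (pr_top G F HF).
  - split; [tauto|]. apply (pr_bot G F HF).
  - rewrite (IB_ext G _ (fun H => H (And (subst c g1) (subst c g2)))).
    apply IB_op; auto.
    intros H HH. rewrite (pr_and G H _ _ HH), IHg1, IHg2 by auto. tauto.
  - rewrite (IB_ext G _ (fun H => H (Or (subst c g1) (subst c g2)))).
    apply IB_op; auto.
    intros H HH. rewrite (pr_or G H _ _ HH), IHg1, IHg2 by auto. tauto.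
  - rewrite (IB_ext G _ (clauses [(subst c g1, subst c g2)])).
    rewrite (IB_clauses G) by auto. apply (conj1 G); auto.
    intros H HH. rewrite IHg1, IHg2 by auto. apply (clause1 G); auto.
  - rewrite (IB_ext G _ (fun H => H (Str (subst c g1) (subst c g2)))).
    apply IB_op; auto.
    intros H HH. rewrite (MB_ext G _ (clauses [(subst c g1, subst c g2)])).
    rewrite (MB_clauses G) by auto. apply (conj1 G H (Str _ _)); auto.
    intros K HK. rewrite IHg1, IHg2 by auto. apply (clause1 G); auto.
Qed.

Lemma soundness G g : S4K_ext (upper_axioms G) g ->
  forall v, (forall n, Good G (v n)) -> forall F, prime G F -> eval G v g F.
Proof.
  induction 1 as [s f Hc | | | | | f Hf | a b Ha IHa Hab IHab | a Ha IHa | a Ha IHa | s f Hf IHf];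
    intros v Hv F HF.
  - rewrite eval_msubst. destruct Hc as [Hb Hv']. apply eval_beval; auto.
  - simpl. intros [a [Fa Ha]] [b [Fb Hb]]. exists (And a b). split.
    apply (pr_and G F _ _ HF); auto.
    intros H HH Hab. apply (pr_and G H _ _ HH) in Hab. destruct Hab. apply Ha; auto.
  - simpl. intros [L1 [F1 H1]] [L2 [F2 H2]]. exists (L1 ++ L2). split.
    intros p Hp. apply in_app_or in Hp. destruct Hp; auto.
    intros H HH Hc. apply clauses_app in Hc. destruct Hc. apply H1; auto.
  - simpl. intros [a [Fa Ha]]. apply Ha; auto.
  - simpl. intros [a [Fa Ha]]. exists a. split; auto. intros H HH Hha. exists a. auto.
  - destruct Hf as [ -> | [ [f0 [Gf ->]] | -> ] ].
    + simpl. apply (grz_sound G (proj1_sig (constructive_indefinite_description _ (Hv 0)))).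
      destruct (constructive_indefinite_description _ (Hv 0)); auto. auto.
    + set (c := fun n => proj1_sig (constructive_indefinite_description _ (Good_IB G _ (Hv n)))).
      assert (Hc : forall n F, prime G F -> (IB G (v n) F <-> F (c n))).
      { intros n. unfold c. destruct (constructive_indefinite_description _ _). auto. }
      apply (trans_eval G v c Hc f0 F HF). apply (pr_thm G F _ HF).
      apply iA_subst. apply iA_hyp. auto.
    + simpl. intros [L [FL HL]]. exists (conjstr L). split.
      apply (pr_conj G F _ HF). intros x Hx. apply in_map_iff in Hx.
      destruct Hx as [p [<- Hp]]. auto.
      intros H HH HcL. exists L. split; auto. intros p Hp.
      apply (proj1 (pr_conj G H _ HH) HcL). apply in_map_iff. eauto.
  - apply (IHab v Hv F HF). apply IHa; auto.
  - simpl. exists Top. split. apply (pr_top G F HF). intros H HH _. auto.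
  - simpl. exists []. split. intros p []. intros H HH _. auto.
  - rewrite eval_msubst. apply IHf; auto. intros n. apply Good_eval; auto.
Qed.

Lemma subst_id f : subst Var f = f.
Proof. induction f; simpl; congruence. Qed.

Lemma faithful G f : S4K_ext (upper_axioms G) (t f) -> iA_ext G f.
Proof.
  intros H. set (v := fun n (F : form -> Prop) => F (Var n)).
  assert (Hv : forall n, Good G (v n)) by (intros; apply Good_op).
  assert (Hc : forall n F, prime G F -> (IB G (v n) F <-> F (Var n))) by (intros; apply IB_op; auto).
  assert (All : forall F, prime G F -> F f).
  { intros F HF. rewrite <- (subst_id f). apply (trans_eval G v Var Hc f F HF).
    apply (soundness G _ H v Hv F HF). }
  apply top_le. apply sep. intros F HF _. exact (All F HF).
Qed.

Definition sub5 (a b c d e : mform) (n : nat) : mform :=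
  match n with 0 => a | 1 => b | 2 => c | 3 => d | _ => e end.

Ltac ctaut_solve := split; [simpl; tauto |
  intros v; simpl; destruct (v 0), (v 1), (v 2), (v 3), (v 4); reflexivity].

Lemma Ltaut L : is_S4K_logic L -> forall s f, ctaut f -> L (msubst s f).
Proof. intros HL; apply HL. Qed.
Lemma Lmp L a b : is_S4K_logic L -> L a -> L (MImp a b) -> L b.
Proof. intros HL; apply HL. Qed.
Lemma Lnec L a : is_S4K_logic L -> L a -> L (BoxI a).
Proof. intros HL; apply HL. Qed.
Lemma Lnecm L a : is_S4K_logic L -> L a -> L (BoxM a).
Proof. intros HL; apply HL. Qed.
Lemma Lsub L s f : is_S4K_logic L -> L f -> L (msubst s f).
Proof. intros HL; apply HL. Qed.

Lemma LKi L a b : is_S4K_logic L -> L (MImp (BoxI (MImp a b)) (MImp (BoxI a) (BoxI b))).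
Proof. intros HL. apply (Lsub L (sub5 a b a a a) K_i HL). apply HL. Qed.
Lemma LKm L a b : is_S4K_logic L -> L (MImp (BoxM (MImp a b)) (MImp (BoxM a) (BoxM b))).
Proof. intros HL. apply (Lsub L (sub5 a b a a a) K_m HL). apply HL. Qed.
Lemma LT L a : is_S4K_logic L -> L (MImp (BoxI a) a).
Proof. intros HL. apply (Lsub L (sub5 a a a a a) T_i HL). apply HL. Qed.
Lemma L4 L a : is_S4K_logic L -> L (MImp (BoxI a) (BoxI (BoxI a))).
Proof. intros HL. apply (Lsub L (sub5 a a a a a) Four_i HL). apply HL. Qed.

Lemma Ltrans L a b c : is_S4K_logic L -> L (MImp a b) -> L (MImp b c) -> L (MImp a c).
Proof.
  intros HL H1 H2. eapply (Lmp L _ _ HL H2). eapply (Lmp L _ _ HL H1).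
  exact (Ltaut L HL (sub5 a b c a a) (MImp (MImp (MVar 0) (MVar 1)) (MImp (MImp (MVar 1) (MVar 2)) (MImp (MVar 0) (MVar 2)))) ltac:(ctaut_solve)).
Qed.
Lemma Lk L a b : is_S4K_logic L -> L b -> L (MImp a b).
Proof.
  intros HL H. eapply (Lmp L _ _ HL H).
  exact (Ltaut L HL (sub5 a b a a a) (MImp (MVar 1) (MImp (MVar 0) (MVar 1))) ltac:(ctaut_solve)).
Qed.
Lemma Lrefl L a : is_S4K_logic L -> L (MImp a a).
Proof. intros HL. exact (Ltaut L HL (sub5 a a a a a) (MImp (MVar 0) (MVar 0)) ltac:(ctaut_solve)). Qed.
Lemma Lcurry L a b c : is_S4K_logic L -> L (MImp (MAnd a b) c) -> L (MImp a (MImp b c)).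
Proof.
  intros HL H. eapply (Lmp L _ _ HL H).
  exact (Ltaut L HL (sub5 a b c a a) (MImp (MImp (MAnd (MVar 0) (MVar 1)) (MVar 2)) (MImp (MVar 0) (MImp (MVar 1) (MVar 2)))) ltac:(ctaut_solve)).
Qed.
Lemma Luncurry L a b c : is_S4K_logic L -> L (MImp a (MImp b c)) -> L (MImp (MAnd a b) c).
Proof.
  intros HL H. eapply (Lmp L _ _ HL H).
  exact (Ltaut L HL (sub5 a b c a a) (MImp (MImp (MVar 0) (MImp (MVar 1) (MVar 2))) (MImp (MAnd (MVar 0) (MVar 1)) (MVar 2))) ltac:(ctaut_solve)).
Qed.
Lemma Lmono L a b : is_S4K_logic L -> L (MImp a b) -> L (MImp (BoxI a) (BoxI b)).
Proof. intros HL H. eapply (Lmp L _ _ HL). apply (Lnec L _ HL H). apply LKi; auto. Qed.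
Lemma Lmonom L a b : is_S4K_logic L -> L (MImp a b) -> L (MImp (BoxM a) (BoxM b)).
Proof. intros HL H. eapply (Lmp L _ _ HL). apply (Lnecm L _ HL H). apply LKm; auto. Qed.
Lemma Lband L a b : is_S4K_logic L -> L (MImp (MAnd (BoxI a) (BoxI b)) (BoxI (MAnd a b))).
Proof.
  intros HL. apply Luncurry; auto. eapply Ltrans; auto. apply Lmono; auto.
  exact (Ltaut L HL (sub5 a b a a a) (MImp (MVar 0) (MImp (MVar 1) (MAnd (MVar 0) (MVar 1)))) ltac:(ctaut_solve)).
  apply LKi; auto.
Qed.
Lemma Lbandm L a b : is_S4K_logic L -> L (MImp (MAnd (BoxM a) (BoxM b)) (BoxM (MAnd a b))).
Proof.
  intros HL. apply Luncurry; auto. eapply Ltrans; auto. apply Lmonom; auto.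
  exact (Ltaut L HL (sub5 a b a a a) (MImp (MVar 0) (MImp (MVar 1) (MAnd (MVar 0) (MVar 1)))) ltac:(ctaut_solve)).
  apply LKm; auto.
Qed.
Lemma LBC L P R S : is_S4K_logic L ->
  L (MImp (MAnd (BoxI P) (BoxI R)) (BoxI S)) -> L (MImp (BoxI P) (BoxI (MImp (BoxI R) (BoxI S)))).
Proof.
  intros HL H. eapply Ltrans; auto. apply L4; auto. apply Lmono; auto. apply Lcurry; auto.
Qed.

Definition openL (L : mform -> Prop) (X : mform) := L (MImp X (BoxI X)).

Lemma open_t L f : is_S4K_logic L -> openL L (t f).
Proof.
  intros HL. unfold openL. destruct f; simpl; try apply L4; auto.
  - apply Lk; auto. apply Lnec; auto.
    exact (Ltaut L HL (sub5 MTop MTop MTop MTop MTop) MTop ltac:(ctaut_solve)).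
  - exact (Ltaut L HL (sub5 (BoxI MBot) MTop MTop MTop MTop) (MImp MBot (MVar 0)) ltac:(ctaut_solve)).
Qed.

Lemma tK L A B : is_S4K_logic L -> openL L A -> L (BoxI (MImp A (BoxI (MImp B A)))).
Proof.
  intros HL HA. apply Lnec; auto. eapply Ltrans; auto. exact HA. apply Lmono; auto.
  exact (Ltaut L HL (sub5 A B A A A) (MImp (MVar 0) (MImp (MVar 1) (MVar 0))) ltac:(ctaut_solve)).
Qed.
Lemma tS L A B C : is_S4K_logic L ->
  L (BoxI (MImp (BoxI (MImp A (BoxI (MImp B C)))) (BoxI (MImp (BoxI (MImp A B)) (BoxI (MImp A C)))))).
Proof.
  intros HL. apply Lnec; auto. apply LBC; auto. eapply Ltrans; auto. apply Lband; auto.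
  apply Lmono; auto. eapply (Lmp L _ _ HL). apply (LT L (MImp B C) HL).
  exact (Ltaut L HL (sub5 A B C (BoxI (MImp B C)) A)
    (MImp (MImp (MVar 3) (MImp (MVar 1) (MVar 2))) (MImp (MAnd (MImp (MVar 0) (MVar 3)) (MImp (MVar 0) (MVar 1))) (MImp (MVar 0) (MVar 2)))) ltac:(ctaut_solve)).
Qed.
Lemma tand1 L A B : is_S4K_logic L -> L (BoxI (MImp (BoxI (MAnd A B)) A)).
Proof.
  intros HL. apply Lnec; auto. eapply Ltrans; auto. apply LT; auto.
  exact (Ltaut L HL (sub5 A B A A A) (MImp (MAnd (MVar 0) (MVar 1)) (MVar 0)) ltac:(ctaut_solve)).
Qed.
Lemma tand2 L A B : is_S4K_logic L -> L (BoxI (MImp (BoxI (MAnd A B)) B)).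
Proof.
  intros HL. apply Lnec; auto. eapply Ltrans; auto. apply LT; auto.
  exact (Ltaut L HL (sub5 A B A A A) (MImp (MAnd (MVar 0) (MVar 1)) (MVar 1)) ltac:(ctaut_solve)).
Qed.
Lemma tand3 L A B : is_S4K_logic L -> openL L A -> openL L B ->
  L (BoxI (MImp A (BoxI (MImp B (BoxI (MAnd A B)))))).
Proof.
  intros HL HA HB. apply Lnec; auto. eapply Ltrans; auto. exact HA.
  eapply Ltrans; auto. apply LBC; auto. apply Lband; auto.
  apply Lmono; auto. eapply (Lmp L _ _ HL). exact HB.
  exact (Ltaut L HL (sub5 B (BoxI B) (BoxI (MAnd A B)) A A)
    (MImp (MImp (MVar 0) (MVar 1)) (MImp (MImp (MVar 1) (MVar 2)) (MImp (MVar 0) (MVar 2)))) ltac:(ctaut_solve)).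
Qed.
Lemma tor1 L A B : is_S4K_logic L -> openL L A -> L (BoxI (MImp A (BoxI (MOr A B)))).
Proof.
  intros HL HA. apply Lnec; auto. eapply Ltrans; auto. exact HA. apply Lmono; auto.
  exact (Ltaut L HL (sub5 A B A A A) (MImp (MVar 0) (MOr (MVar 0) (MVar 1))) ltac:(ctaut_solve)).
Qed.
Lemma tor2 L A B : is_S4K_logic L -> openL L B -> L (BoxI (MImp B (BoxI (MOr A B)))).
Proof.
  intros HL HB. apply Lnec; auto. eapply Ltrans; auto. exact HB. apply Lmono; auto.
  exact (Ltaut L HL (sub5 A B A A A) (MImp (MVar 1) (MOr (MVar 0) (MVar 1))) ltac:(ctaut_solve)).
Qed.
Lemma tor3 L A B C : is_S4K_logic L ->
  L (BoxI (MImp (BoxI (MImp A C)) (BoxI (MImp (BoxI (MImp B C)) (BoxI (MImp (BoxI (MOr A B)) C)))))).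
Proof.
  intros HL. apply Lnec; auto. apply LBC; auto. eapply Ltrans; auto. apply Lband; auto.
  apply Lmono; auto. eapply (Lmp L _ _ HL). apply (LT L (MOr A B) HL).
  exact (Ltaut L HL (sub5 A B C (BoxI (MOr A B)) A)
    (MImp (MImp (MVar 3) (MOr (MVar 0) (MVar 1))) (MImp (MAnd (MImp (MVar 0) (MVar 2)) (MImp (MVar 1) (MVar 2))) (MImp (MVar 3) (MVar 2)))) ltac:(ctaut_solve)).
Qed.
Lemma tbot L A : is_S4K_logic L -> L (BoxI (MImp MBot A)).
Proof.
  intros HL. apply Lnec; auto.
  exact (Ltaut L HL (sub5 A A A A A) (MImp MBot (MVar 0)) ltac:(ctaut_solve)).
Qed.
Lemma tmp L A B : is_S4K_logic L -> L A -> L (BoxI (MImp A B)) -> L B.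
Proof. intros HL H1 H2. eapply (Lmp L _ _ HL H1). eapply (Lmp L _ _ HL H2). apply LT; auto. Qed.

Lemma ipc_t L f : is_S4K_logic L -> ipc f -> forall s, L (t (subst s f)).
Proof.
  intros HL Hi. induction Hi; intros s; simpl.
  - apply tK; auto. apply open_t; auto.
  - apply tS; auto.
  - apply tand1; auto.
  - apply tand2; auto.
  - apply tand3; auto; apply open_t; auto.
  - apply tor1; auto; apply open_t; auto.
  - apply tor2; auto; apply open_t; auto.
  - apply tor3; auto.
  - apply tbot; auto.
  - exact (Ltaut L HL (sub5 MTop MTop MTop MTop MTop) MTop ltac:(ctaut_solve)).
  - apply (tmp L _ _ HL (IHHi1 s) (IHHi2 s)).
Qed.

Lemma tstr L X Y Z : is_S4K_logic L -> L (MImp (MAnd X Y) Z) ->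
  L (BoxI (MImp (BoxI (MAnd (BoxI (BoxM X)) (BoxI (BoxM Y)))) (BoxI (BoxM Z)))).
Proof.
  intros HL H. apply Lnec; auto. eapply Ltrans; auto. apply LT; auto.
  eapply Ltrans; auto. apply Lband; auto. apply Lmono; auto.
  eapply Ltrans; auto. apply Lbandm; auto. apply Lmonom; auto.
Qed.

Lemma open_and L B C : is_S4K_logic L -> openL L B -> openL L C ->
  L (MImp (MAnd B C) (BoxI (MAnd B C))).
Proof.
  intros HL HB HC. eapply Ltrans; auto. 2: apply Lband; auto.
  eapply (Lmp L _ _ HL HC). eapply (Lmp L _ _ HL HB).
  exact (Ltaut L HL (sub5 B C (BoxI B) (BoxI C) B)
    (MImp (MImp (MVar 0) (MVar 2)) (MImp (MImp (MVar 1) (MVar 3)) (MImp (MAnd (MVar 0) (MVar 1)) (MAnd (MVar 2) (MVar 3))))) ltac:(ctaut_solve)).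
Qed.

Lemma subst_comp s s0 f : subst s (subst s0 f) = subst (fun n => subst s (s0 n)) f.
Proof. induction f; simpl; congruence. Qed.

Definition eqv (L : mform -> Prop) X Y := L (MImp X Y) /\ L (MImp Y X).

Lemma cong_bin L (op : mform -> mform -> mform) X1 X2 Y1 Y2 : is_S4K_logic L ->
  (forall a b c d, L (MImp a c) -> L (MImp c a) -> L (MImp b d) -> L (MImp d b) ->
     L (MImp (op a b) (op c d))) ->
  eqv L X1 Y1 -> eqv L X2 Y2 -> eqv L (BoxI (op X1 X2)) (BoxI (op Y1 Y2)).
Proof.
  intros HL Hop [H1 H1'] [H2 H2']. split; apply Lmono; auto.
Qed.

Lemma repl L s f : is_S4K_logic L ->
  eqv L (msubst (fun n => t (s n)) (t f)) (t (subst s f)).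
Proof.
  intros HL. induction f; simpl.
  - split. apply LT; auto. apply open_t; auto.
  - split; apply Lrefl; auto.
  - split; apply Lrefl; auto.
  - apply cong_bin; auto. intros a b c d H1 _ H2 _.
    eapply (Lmp L _ _ HL H2). eapply (Lmp L _ _ HL H1).
    exact (Ltaut L HL (sub5 a b c d a)
      (MImp (MImp (MVar 0) (MVar 2)) (MImp (MImp (MVar 1) (MVar 3)) (MImp (MAnd (MVar 0) (MVar 1)) (MAnd (MVar 2) (MVar 3))))) ltac:(ctaut_solve)).
  - apply cong_bin; auto. intros a b c d H1 _ H2 _.
    eapply (Lmp L _ _ HL H2). eapply (Lmp L _ _ HL H1).
    exact (Ltaut L HL (sub5 a b c d a)
      (MImp (MImp (MVar 0) (MVar 2)) (MImp (MImp (MVar 1) (MVar 3)) (MImp (MOr (MVar 0) (MVar 1)) (MOr (MVar 2) (MVar 3))))) ltac:(ctaut_solve)).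
  - apply cong_bin; auto. intros a b c d _ H1 H2 _.
    eapply (Lmp L _ _ HL H2). eapply (Lmp L _ _ HL H1).
    exact (Ltaut L HL (sub5 a b c d a)
      (MImp (MImp (MVar 2) (MVar 0)) (MImp (MImp (MVar 1) (MVar 3)) (MImp (MImp (MVar 0) (MVar 1)) (MImp (MVar 2) (MVar 3))))) ltac:(ctaut_solve)).
  - destruct IHf1 as [H1 H1']. destruct IHf2 as [H2 H2'].
    assert (Himp : forall a b c d, L (MImp c a) -> L (MImp b d) -> L (MImp (MImp a b) (MImp c d))).
    { intros a b c d Hca Hbd. eapply (Lmp L _ _ HL Hbd). eapply (Lmp L _ _ HL Hca).
      exact (Ltaut L HL (sub5 a b c d a)
      (MImp (MImp (MVar 2) (MVar 0)) (MImp (MImp (MVar 1) (MVar 3)) (MImp (MImp (MVar 0) (MVar 1)) (MImp (MVar 2) (MVar 3))))) ltac:(ctaut_solve)). }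
    split; apply Lmono; auto; apply Lmonom; auto.
Qed.

Lemma to_theta G L : is_S4K_logic L -> (forall f, G f -> L (t f)) ->
  forall f, iA_ext G f -> forall s, L (t (subst s f)).
Proof.
  intros HL HG f Hf. induction Hf; intros s'; simpl.
  - rewrite subst_comp. apply ipc_t; auto.
  - apply tstr; auto.
    eapply (Lmp L (MImp (MAnd (t (subst s' b)) (t (subst s' c))) (BoxI (MAnd (t (subst s' b)) (t (subst s' c))))) _ HL).
    apply open_and; auto; apply open_t; auto.
    exact (Ltaut L HL (sub5 (t (subst s' a)) (t (subst s' b)) (t (subst s' c)) (BoxI (MAnd (t (subst s' b)) (t (subst s' c)))) MTop)
      (MImp (MImp (MAnd (MVar 1) (MVar 2)) (MVar 3)) (MImp (MAnd (MImp (MVar 0) (MVar 1)) (MImp (MVar 0) (MVar 2))) (MImp (MVar 0) (MVar 3)))) ltac:(ctaut_solve)).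
  - apply tstr; auto. eapply (Lmp L _ _ HL).
    apply (LT L (MOr (t (subst s' a)) (t (subst s' b))) HL).
    exact (Ltaut L HL (sub5 (t (subst s' a)) (t (subst s' b)) (t (subst s' c)) (BoxI (MOr (t (subst s' a)) (t (subst s' b)))) MTop)
      (MImp (MImp (MVar 3) (MOr (MVar 0) (MVar 1))) (MImp (MAnd (MImp (MVar 0) (MVar 2)) (MImp (MVar 1) (MVar 2))) (MImp (MVar 3) (MVar 2)))) ltac:(ctaut_solve)).
  - apply tstr; auto.
    exact (Ltaut L HL (sub5 (t (subst s' a)) (t (subst s' b)) (t (subst s' c)) MTop MTop)
      (MImp (MAnd (MImp (MVar 0) (MVar 1)) (MImp (MVar 1) (MVar 2))) (MImp (MVar 0) (MVar 2))) ltac:(ctaut_solve)).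
  - apply HG in H. apply (Lsub L (fun n => t (s' n)) _ HL) in H.
    destruct (repl L s' f HL) as [H1 _]. eapply (Lmp L _ _ HL). exact H. exact H1.
  - apply (tmp L _ _ HL (IHHf1 s') (IHHf2 s')).
  - apply Lnec; auto. apply Lnecm; auto. eapply (Lmp L _ _ HL (IHHf s')). simpl. apply LT; auto.
  - rewrite subst_comp. apply IHHf.
Qed.

Theorem theorem4p14 (G : form -> Prop) (Theta : mform -> Prop) :
  is_S4K_logic Theta ->
  (forall g, S4K_ext (t_img G) g -> Theta g) ->
  (forall g, Theta g -> S4K_ext (upper_axioms G) g) ->
  forall f : form, iA_ext G f <-> Theta (t f).
Proof.
  intros HL Hlow Hup f. split.
  - intros H. rewrite <- (subst_id f). apply (to_theta G Theta HL); auto.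
    intros g Hg. apply Hlow. apply S_hyp. exists g. auto.
  - intros H. apply faithful. apply Hup. exact H.
Qed.
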